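(* Let $1\ge\Delta^{-1},q\gg L^{-1}\gg n^{-1}$. Let $G$ be a $q$-cut-dense graph of order $n$, let $v\in V(G)$ and let $U\subseteq V(G)$ with $|U|\ge L$. Then $G$ contains, as a subgraph, a perfect $\Delta$-ary tree of height at most $19q^{-4}$ rooted at $v$ with all its leaves in $U$.
   Context: A graph $G$ is $q$-cut-dense if for every partition $V(G)=A\cup B$ into disjoint sets, the number of edges between $A$ and $B$ is at least $q|A||B|$. A $\Delta$-ary tree is one in which every non-leaf vertex has degree $\Delta$; a perfect $\Delta$-ary tree of height $h$ has a designated root with every leaf at distance $h$ from the root. The hierarchy means: given $\Delta$ and $q$, $L$ is sufficiently large, and given $L$, $n$ is sufficiently large. *)

(* Defs.v *)
From HB Require Import structures.
From mathcomp Require Import all_boot all_order all_algebra.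
From mathcomp Require Import reals.
Set Implicit Arguments. Unset Strict Implicit. Unset Printing Implicit Defensive.
Import Order.TTheory GRing.Theory Num.Theory.
Local Open Scope ring_scope.

(* A simple graph is a symmetric irreflexive relation e on a finite type T. *)

Definition cut_edges (T : finType) (e : rel T) (A : {set T}) : nat :=
  #|[set p : T * T | (p.1 \in A) && (p.2 \notin A) && e p.1 p.2]|.

Definition cut_dense (R : realType) (T : finType) (e : rel T) (q : R) : Prop :=
  forall A : {set T}, q * (#|A|%:R) * (#|~: A|%:R) <= (cut_edges e A)%:R.

(* The tree is encoded by its vertex set S,
   a parent map par and a depth map d: the tree edges are {x, par x}
   (x in S, x <> v), which must be edges of G; depth increases by one along
   each tree edge; every vertex has depth <= h; every vertex of depth < h
   (non-leaf) has degree D in the tree, i.e. D children if it is the root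
   and D - 1 children (plus its parent) otherwise; every vertex of depth h
   (a leaf, all at distance h from the root) lies in U. *)
Definition contains_perfect_tree (T : finType) (e : rel T) (D h : nat)
    (v : T) (U : {set T}) : Prop :=
  exists (S : {set T}) (par : T -> T) (d : T -> nat),
    [/\ v \in S /\ d v = 0%N,
     forall x, x \in S -> x != v ->
       [/\ par x \in S, e x (par x) & d x = (d (par x)).+1],
     forall x, x \in S -> (d x <= h)%N,
     forall x, x \in S -> (d x < h)%N ->
       #|[set y in S | (y != v) && (par y == x)]| = (if x == v then D else D.-1)
     & forall x, x \in S -> d x = h -> x \in U].

(* Main.v *)
Require Import Defs.
From HB Require Import structures.
From mathcomp Require Import all_boot all_order all_algebra.
From mathcomp Require Import reals.
From mathcomp Require Import zify ring lra.
Import Order.TTheory GRing.Theory Num.Theory.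
Local Open Scope ring_scope.

Set Implicit Arguments. Unset Strict Implicit. Unset Printing Implicit Defensive.
Local Close Scope ring_scope.

Section Graph.
Variables (T : finType) (e : rel T).
Hypothesis esym : symmetric e.
Hypothesis eirr : irreflexive e.

Definition nb (x : T) (A : {set T}) : nat := #|[set y in A | e x y]|.
Definition NK (K : nat) (A : {set T}) : {set T} := [set x | K <= nb x A].



Lemma card_sumb (A : {set T}) (P : pred T) : #|[set y in A | P y]| = \sum_(y in A) (P y : nat).
Proof.
rewrite -sum1_card big_mkcond [RHS]big_mkcond /=.
apply: eq_bigr => y _; rewrite !inE; by case: (y \in A); case: (P y).
Qed.

Lemma nbE x (A : {set T}) : nb x A = \sum_(y in A) (e x y : nat).
Proof. exact: card_sumb. Qed.

Lemma nb_le x (A : {set T}) : nb x A <= #|A|.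
Proof. by apply: subset_leq_card; apply/subsetP => y; rewrite inE => /andP[]. Qed.

Lemma nb_sub x (A B : {set T}) : A \subset B -> nb x A <= nb x B.
Proof.
move=> /subsetP AB; apply: subset_leq_card; apply/subsetP => y.
by rewrite !inE => /andP[/AB -> ->].
Qed.

Lemma nbU x (A B : {set T}) : nb x (A :|: B) <= nb x A + nb x B.
Proof.
apply: leq_trans (leq_card_setU _ _); rewrite /nb.
by apply: subset_leq_card; apply/subsetP => y; rewrite !inE; case: (y \in A); case: (y \in B); case: (e x y).
Qed.

Lemma nbC x (A : {set T}) : nb x [set: T] = nb x A + nb x (~: A).
Proof.
by rewrite !nbE (big_setID A) /= setTI setTD.
Qed.

Lemma NK_mono K (A B : {set T}) : A \subset B -> NK K A \subset NK K B.
Proof.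
move=> AB; apply/subsetP => x; rewrite !inE => h; apply: leq_trans h _; exact: nb_sub.
Qed.

Lemma double_count (A B : {set T}) :
  \sum_(x in A) nb x B = \sum_(y in B) nb y A.
Proof.
under eq_bigr do rewrite nbE.
rewrite exchange_big /=; apply: eq_bigr => y _; rewrite nbE.
by apply: eq_bigr => x _; rewrite esym.
Qed.

Lemma cut_sum (A : {set T}) : cut_edges e A = \sum_(b in ~: A) nb b A.
Proof.
rewrite /cut_edges -sum1_card.
rewrite (eq_bigl (fun p : T * T => (p.1 \in A) && ((p.2 \in ~: A) && e p.1 p.2))); last first.
  by move=> [a b]; rewrite !inE andbA.
rewrite -(pair_big_dep (fun a => a \in A) (fun a b => (b \in ~: A) && e a b) (fun _ _ => 1)) /=.
rewrite (exchange_big_dep (fun b => b \in ~: A)) /=; last by move=> i j _ /andP[].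
apply: eq_bigr => b bA; rewrite nbE big_mkcond [RHS]big_mkcond /=.
apply: eq_bigr => a _; rewrite bA esym; by case: (a \in A); case: (e b a).
Qed.

Lemma cut_single x : cut_edges e [set x] = nb x [set: T].
Proof.
rewrite cut_sum nbE [RHS](big_setID [set x]) /= setTI setTD big_set1 eirr add0n.
by apply: eq_bigr => y _; rewrite nbE big_set1 esym.
Qed.

End Graph.


Section Tree.
Variables (T : finType) (e : rel T).
Hypothesis esym : symmetric e.
Variables (D : nat) (U : {set T}).

Definition tree (j c : nat) (r : T) (S : {set T}) (par : T -> T) (d : T -> nat) :=
    [/\ r \in S /\ d r = 0%N,
     forall x, x \in S -> x != r ->
       [/\ par x \in S, e x (par x) & d x = (d (par x)).+1],
     forall x, x \in S -> (d x <= j)%N,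
     forall x, x \in S -> (d x < j)%N ->
       #|[set y in S | (y != r) && (par y == x)]| = (if x == r then c else D.-1)
     & forall x, x \in S -> d x = j -> x \in U].

Lemma tree_single j c r : (j = 0 -> r \in U) -> (0 < j -> c = 0) ->
  tree j c r [set r] id (fun _ => 0).
Proof.
move=> h0 h1; split.
- by rewrite set11.
- by move=> x; rewrite inE => ->.
- by [].
- move=> x; rewrite inE => /eqP -> /h1 ->; rewrite eqxx.
  apply/eqP; rewrite cards_eq0; apply/eqP/setP => y; rewrite !inE.
  by case: (y == r).
- by move=> x; rewrite inE => /eqP -> /(@Logic.eq_sym _ _ _) /h0.
Qed.

Lemma tree_add j c x y S1 p1 d1 S2 p2 d2 :
  tree j.+1 c x S1 p1 d1 -> tree j D.-1 y S2 p2 d2 -> e x y ->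
  [disjoint S1 & S2] ->
  tree j.+1 c.+1 x (S1 :|: S2)
    (fun z => if z \in S2 then (if z == y then x else p2 z) else p1 z)
    (fun z => if z \in S2 then (d2 z).+1 else d1 z).
Proof.
move=> [[xS1 dx] P1 B1 C1 L1] [[yS2 dy] P2 B2 C2 L2] exy dis.
have n12 z : z \in S1 -> z \notin S2.
  by move=> zS1; rewrite (disjointFr dis zS1).
have xS2 : x \notin S2 by apply: n12.
have yx : y != x by apply: contraNneq xS2 => <-.
split.
- by rewrite inE xS1 (negbTE xS2).
- move=> z; rewrite inE => /orP[zS1|zS2] zx.
  + rewrite (negbTE (n12 _ zS1)).
    have [pS ez dz] := P1 z zS1 zx.
    by rewrite inE pS (negbTE (n12 _ pS)).
  + rewrite zS2; case: eqP => [->|/eqP zy].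
    * by rewrite inE xS1 (negbTE xS2) esym exy dy dx.
    * have [pS ez dz] := P2 z zS2 zy.
      by rewrite inE pS orbT dz.
- move=> z; rewrite inE => /orP[zS1|zS2].
  + by rewrite (negbTE (n12 _ zS1)); apply: B1.
  + by rewrite zS2 ltnS; apply: B2.
- move=> z; rewrite inE => /orP[zS1|zS2].
  + rewrite (negbTE (n12 _ zS1)) => dz.
    case: (eqVneq z x) => [->|zx].
    * have -> : [set w in S1 :|: S2 | (w != x) &&
          ((if w \in S2 then (if w == y then x else p2 w) else p1 w) == x)]
          = y |: [set w in S1 | (w != x) && (p1 w == x)].
        apply/setP => w; rewrite !inE.
        case: (eqVneq w y) => [->|wy]; first by rewrite yS2 eqxx yx orbT.
        case wS2: (w \in S2).
        - rewrite orbT /=.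
          have [pS _ _] := P2 w wS2 wy.
          have -> : (p2 w == x) = false by apply/eqP => ex; move: xS2; rewrite -ex pS.
          rewrite andbF.
          by case wS1: (w \in S1) => //; move: (n12 _ wS1); rewrite wS2.
        - by rewrite orbF.
      have yS1 : (y \in S1) = false by apply/negP => /n12; rewrite yS2.
      by rewrite cardsU1 inE yS1 /= (C1 x xS1) ?dx // eqxx add1n.
    * have -> : [set w in S1 :|: S2 | (w != x) &&
          ((if w \in S2 then (if w == y then x else p2 w) else p1 w) == z)]
          = [set w in S1 | (w != x) && (p1 w == z)].
        apply/setP => w; rewrite !inE.
        case wS2: (w \in S2).
        - rewrite orbT /=.
          have -> : ((if w == y then x else p2 w) == z) = false.
            case: (eqVneq w y) => [_|wy]; first by apply/negbTE; rewrite eq_sym.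
            have [pS _ _] := P2 w wS2 wy.
            by apply/eqP => ez; move: (n12 _ zS1); rewrite -ez pS.
          rewrite andbF.
          by case wS1: (w \in S1) => //; move: (n12 _ wS1); rewrite wS2.
        - by rewrite orbF.
      by rewrite (C1 z zS1 dz) (negbTE zx).
  + rewrite zS2 ltnS => dz.
    have zx : z != x by apply: contraNneq xS2 => <-.
    rewrite (negbTE zx).
    have -> : [set w in S1 :|: S2 | (w != x) &&
          ((if w \in S2 then (if w == y then x else p2 w) else p1 w) == z)]
          = [set w in S2 | (w != y) && (p2 w == z)].
      apply/setP => w; rewrite !inE.
      case wS2: (w \in S2).
      - rewrite orbT /=.
        case: (eqVneq w y) => [->|wy] /=; first by rewrite [x == z]eq_sym (negbTE zx) andbF.
        have wx : w != x by apply: contraTneq wS2 => ->; rewrite (negbTE xS2).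
        by rewrite wx.
      - rewrite orbF /=.
        case: (eqVneq w x) => [_|wx]; first by rewrite andbF.
        case wS1: (w \in S1) => //=.
        have [pS _ _] := P1 w wS1 wx.
        by apply/eqP => ez; move: (n12 _ pS); rewrite ez zS2.
    rewrite (C2 z zS2 dz); by case: (z == y).
- move=> z; rewrite inE => /orP[zS1|zS2].
  + by rewrite (negbTE (n12 _ zS1)); apply: L1.
  + by rewrite zS2 => -[]; apply: L2.
Qed.


Variables (K : nat) (Y : nat -> {set T}).
Hypothesis hY0 : Y 0 \subset U.
Hypothesis hY : forall j x, x \in Y j.+1 -> (K <= nb e x (Y j))%N.

Definition sz (j c : nat) : nat := if j is j'.+1 then (1 + c * (D.+1) ^ j')%N else 1%N.

Lemma sz_le j : (sz j D.-1 <= D.+1 ^ j)%N.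
Proof.
case: j => [|j] //=; rewrite expnS.
have := expn_gt0 D.+1 j; case: D => [|D'] /=; nia.
Qed.

Lemma build j : forall c x (F : {set T}), x \in Y j -> x \notin F -> (c <= D)%N ->
  (#|F| + D.+1 ^ j < K)%N ->
  exists S p d, [/\ tree j c x S p d, [disjoint S & F] & (#|S| <= sz j c)%N].
Proof.
elim: j => [|j IHj] c x F xY xF cD hK.
  exists [set x], id, (fun _ => 0%N); split => //.
  - apply: tree_single => // _; exact: (subsetP hY0).
  - by rewrite disjoints1.
  - by rewrite cards1.
elim: c cD => [|c IHc] cD.
  exists [set x], id, (fun _ => 0%N); split => //.
  - by apply: tree_single.
  - by rewrite disjoints1.
  - by rewrite cards1.
have [S1 [p1 [d1 [T1 dis1 sz1]]]] := IHc (ltnW cD).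
set B := D.+1 ^ j.
have B1 : (0 < B)%N by rewrite expn_gt0.
have hKx := hY xY.
have [y yN] : exists y, y \in [set y in Y j | e x y] :\: (F :|: S1).
  apply/set0Pn; rewrite -card_gt0 cardsD.
  have : (#|[set y in Y j | e x y] :&: (F :|: S1)| <= #|F| + #|S1|)%N.
    by apply: leq_trans (subset_leq_card (subsetIr _ _)) (leq_card_setU _ _).
  rewrite /nb in hKx; move: sz1 hK; rewrite /sz -/B expnS -/B => sz1 hK.
  nia.
move: yN; rewrite !inE negb_or => /andP[/andP[yF yS1] /andP[yY exy]].
have hK' : (#|F :|: S1| + D.+1 ^ j < K)%N.
  apply: leq_ltn_trans (leq_add (leq_card_setU _ _) (leqnn _)) _.
  move: sz1 hK; rewrite /sz -/B expnS -/B => sz1 hK; nia.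
have yF' : y \notin F :|: S1 by rewrite inE negb_or yF yS1.
have [S2 [p2 [d2 [T2 dis2 sz2]]]] := IHj D.-1 y (F :|: S1) yY yF' (leq_pred _) hK'.
have h2 : [disjoint F :|: S1 & S2] by rewrite disjoint_sym.
have d12 : [disjoint S1 & S2] := disjointWl (subsetUr F S1) h2.
have d2F : [disjoint S2 & F] by rewrite disjoint_sym; exact: disjointWl (subsetUl F S1) h2.
eexists; eexists; eexists; split.
- exact: tree_add T1 T2 exy d12.
- by rewrite disjoints_subset subUset -!disjoints_subset dis1 d2F.
- apply: leq_trans (leq_card_setU _ _) _.
  have := sz_le j; move: sz1 sz2; rewrite /sz -/B => sz1 sz2 h.
  rewrite mulSn; nia.
Qed.

End Tree.


Section Core.
Variables (T : finType) (e : rel T).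
Hypothesis esym : symmetric e.
Hypothesis eirr : irreflexive e.

Definition E (P Q : {set T}) := \sum_(p in P) nb e p Q.

Lemma E_le P Q : E P Q <= #|P| * #|T|.
Proof.
rewrite /E -sum_nat_const; apply: leq_sum => p _.
apply: leq_trans (nb_le _ _ _) (max_card _).
Qed.

Lemma core K (W : {set T}) : exists P Q : {set T},
  [/\ P \subset W, P \subset NK e K Q, Q \subset NK e K P &
      E W [set: T] <= #|P| * #|T| + K * (#|W| + #|T|)].
Proof.
pose good (pq : {set T} * {set T}) :=
  (pq.1 \subset W) && (E W [set: T] <= E pq.1 pq.2 + K * (#|W :\: pq.1| + #|~: pq.2|)).
have g0 : good (W, [set: T]).
  by rewrite /good /= subxx setDv setCT !cards0 addn0 muln0 addn0 /=.
case: (@arg_minnP _ (W, [set: T]) good (fun pq => #|pq.1| + #|pq.2|) g0) => [[P Q]] /=.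
move=> /andP[PW hE] hmin.
have PQ : P \subset NK e K Q.
  apply/subsetP => p pP; rewrite inE leqNgt; apply/negP => lt.
  have : good (P :\ p, Q).
    rewrite /good /= (subset_trans (subsetDl _ _) PW) /=.
    have -> : W :\: (P :\ p) = p |: (W :\: P).
      apply/setP => z; rewrite !inE; case: (eqVneq z p) => [->|] //=.
      by rewrite (subsetP PW).
    rewrite cardsU1 !inE pP /=.
    move: hE; rewrite /E (big_setD1 _ pP) /=; lia.
  move=> /hmin /=; rewrite (cardsD1 p P) pP; lia.
have QP : Q \subset NK e K P.
  apply/subsetP => y yQ; rewrite inE leqNgt; apply/negP => lt.
  have : good (P, Q :\ y).
    rewrite /good /= PW /=.
    have -> : ~: (Q :\ y) = y |: ~: Q.
      apply/setP => z; rewrite !inE; case: (eqVneq z y) => [->|] //=.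
    rewrite cardsU1 !inE yQ /=.
    have EPQ : E P Q = E P (Q :\ y) + nb e y P.
      rewrite /E nbE -big_split /=; apply: eq_bigr => p _.
      by rewrite !nbE (big_setD1 _ yQ) addnC esym.
    move: hE; rewrite EPQ /=; lia.
  move=> /hmin /=; rewrite (cardsD1 y Q) yQ; lia.
exists P, Q; split => //.
apply: leq_trans hE _; rewrite leq_add ?E_le // leq_mul2l leq_add ?orbT //.
- by rewrite subset_leq_card // subsetDl.
- exact: max_card.
Qed.


Lemma grow_nat K (A0 A1 A2 A3 : {set T}) v :
  A0 \subset A2 -> A1 \subset A3 -> A2 = NK e K A1 -> A3 = NK e K A2 ->
  v \notin A2 -> v \notin A3 ->
  nb e v [set: T] <= 2 * K + #|~: (A0 :|: A1)| /\
  cut_edges e (A0 :|: A1) <= 2 * K * #|~: (A0 :|: A1)| +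
     #|A0 :|: A1| * ((#|A2| - #|A0|) + (#|A3| - #|A1|)).
Proof.
move=> s02 s13 h2 h3 v2 v3.
set S := A0 :|: A1.
have lt2 b : b \notin A2 -> nb e b A1 < K by rewrite h2 inE -ltnNge.
have lt3 b : b \notin A3 -> nb e b A0 < K.
  rewrite h3 inE -ltnNge => h; apply: leq_ltn_trans h; exact: nb_sub.
split.
  rewrite (nbC e v S); apply: leq_add; last exact: nb_le.
  apply: leq_trans (nbU _ _ _ _) _.
  have := lt2 _ v2; have := lt3 _ v3; lia.
rewrite cut_sum.
apply: (@leq_trans (\sum_(b in ~: S) ((K + #|S| * (b \in A3)) + (K + #|S| * (b \in A2))))).
  apply: leq_sum => b _; apply: leq_trans (nbU _ _ _ _) _; apply: leq_add.
  - case: (boolP (b \in A3)) => bA3.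
    + by rewrite muln1; apply: leq_trans (nb_le _ _ _) _; rewrite (leq_trans _ (leq_addl _ _)) // subset_leq_card // subsetUl.
    + by rewrite muln0 addn0 ltnW // lt3.
  - case: (boolP (b \in A2)) => bA2.
    + by rewrite muln1; apply: leq_trans (nb_le _ _ _) _; rewrite (leq_trans _ (leq_addl _ _)) // subset_leq_card // subsetUr.
    + by rewrite muln0 addn0 ltnW // lt2.
rewrite big_split /= !big_split /= !sum_nat_const -!big_distrr /=.
have c3 : \sum_(b in ~: S) (b \in A3 : nat) <= #|A3| - #|A1|.
  rewrite -(card_sumb (~: S) (fun b => b \in A3)).
  have -> : #|A3| - #|A1| = #|A3 :\: A1|.
    by rewrite cardsD; move/setIidPr: s13 => ->.
  apply: subset_leq_card; apply/subsetP => b; rewrite !inE negb_or => /andP[/andP[_ nb1] ->].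
  by rewrite nb1.
have c2 : \sum_(b in ~: S) (b \in A2 : nat) <= #|A2| - #|A0|.
  rewrite -(card_sumb (~: S) (fun b => b \in A2)).
  have -> : #|A2| - #|A0| = #|A2 :\: A0|.
    by rewrite cardsD; move/setIidPr: s02 => ->.
  apply: subset_leq_card; apply/subsetP => b; rewrite !inE negb_or => /andP[/andP[nb0 _] ->].
  by rewrite nb0.
have := leq_mul (leqnn #|S|) c3; have := leq_mul (leqnn #|S|) c2.
lia. exact: esym.
Qed.

End Core.

Local Open Scope ring_scope.

Section Real.
Variables (R : realType) (T : finType) (e : rel T).
Hypothesis esym : symmetric e.
Hypothesis eirr : irreflexive e.
Variable q : R.
Hypothesis q0 : 0 < q.
Hypothesis hcd : cut_dense e q.

Lemma deg_lb x : q * (#|T|.-1)%:R <= (nb e x [set: T])%:R.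
Proof.
have := hcd [set x]; rewrite cards1 mulr1 cardsC1 cut_single //.
Qed.

Lemma sumdeg_lb (A : {set T}) :
  #|A|%:R * (q * (#|T|.-1)%:R) <= (\sum_(x in A) nb e x [set: T])%:R.
Proof.
rewrite natr_sum mulr_natl -sumr_const; apply: ler_sum => x _.
exact: deg_lb.
Qed.

Lemma W1_lb K (U : {set T}) : (0 < K)%N ->
  4 * K%:R <= q * #|U|%:R -> 4 <= #|T|%:R :> R ->
  q * #|T|%:R / 2 <= #|NK e K U|%:R.
Proof.
move=> K0 hU hn.
set W := NK e K U.
have h1 : (\sum_(x in [set: T]) nb e x U <= #|W| * #|U| + #|T| * K)%N.
  apply: (@leq_trans (\sum_(x in [set: T]) (#|U| * (x \in W) + K))).
    apply: leq_sum => x _; case: (boolP (x \in W)) => xW.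
    + by rewrite muln1 (leq_trans (nb_le _ _ _)) // leq_addr.
    + by move: xW; rewrite /W inE -ltnNge muln0 add0n => /ltnW.
  rewrite big_split /= -big_distrr /= -(card_sumb [set: T] (fun x => x \in W)) sum_nat_const.
  have -> : [set x in [set: T] | x \in W] = W by apply/setP => x; rewrite !inE.
  by rewrite cardsT mulnC.
have h2 := sumdeg_lb U.
rewrite -(double_count esym) in h2.
have := leq_trans (leqnn _) h1; rewrite -(ler_nat R) => h3.
have h4 := le_trans h2 h3.
move: h4; rewrite !natrD !natrM.
have n0 : (0 < #|T|)%N by rewrite -(ltr_nat R); lra.
have hT : (#|T|.-1)%:R = #|T|%:R - 1 :> R.
  by rewrite -[in RHS](prednK n0) -natr1 addrK.
rewrite hT => h4.
have u0 : 0 < #|U|%:R :> R.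
  have : 0 < K%:R :> R by rewrite ltr0n.
  move=> hK; rewrite ltr0n lt0n; apply/negP => /eqP h; move: hU; rewrite h mulr0; lra.
have h5 : #|U|%:R * (q * (3 / 4 * #|T|%:R - 1)) <= #|U|%:R * #|W|%:R :> R.
  nra.
rewrite ler_pM2l // in h5.
have : 0 <= q * (#|T|%:R - 4) by apply: mulr_ge0; [exact: ltW q0 | lra].
lra.
Qed.





Lemma natr_pred (m : nat) : (0 < m)%N -> (m.-1)%:R = m%:R - 1 :> R.
Proof. by move=> m0; rewrite -[in RHS](prednK m0) -natr1 addrK. Qed.

Lemma grow_real K (A0 A1 A2 A3 : {set T}) v : (0 < K)%N ->
  A0 \subset A2 -> A1 \subset A3 -> A2 = NK e K A1 -> A3 = NK e K A2 ->
  v \notin A2 -> v \notin A3 ->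
  4 * K%:R <= q * #|A0|%:R -> 3 * q + 6 * K%:R <= q * #|T|%:R ->
  q ^+ 2 * #|T|%:R / 3 <= ((#|A2| - #|A0|) + (#|A3| - #|A1|))%:R.
Proof.
move=> K0 s02 s13 h2 h3 v2 v3 hA hn.
have [hdeg hcut] := grow_nat esym s02 s13 h2 h3 v2 v3.
set S := A0 :|: A1 in hdeg hcut.
set Dl := ((#|A2| - #|A0|) + (#|A3| - #|A1|))%N in hcut *.
have hc := hcd S.
have hd := deg_lb v.
have n0 : (0 < #|T|)%N by apply/card_gt0P; exists v.
rewrite natr_pred // in hd.
have sA : #|A0|%:R <= #|S|%:R :> R by rewrite ler_nat subset_leq_card // subsetUl.
rewrite -(ler_nat R) natrD in hdeg.
rewrite -(ler_nat R) !natrD !natrM in hcut.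
set s := #|S|%:R in hc hcut sA.
set w := #|~: S|%:R in hc hcut hdeg.
set dd := Dl%:R in hcut *.
set n := #|T|%:R in hd hn *.
have K0' : 0 < K%:R :> R by rewrite ltr0n.
have w0 : 0 <= w by rewrite /w ler0n.
have hA' : 4 * K%:R <= q * s.
  have : 0 <= q * (s - #|A0|%:R) by apply: mulr_ge0; [exact: ltW q0| lra].
  lra.
have s0 : 0 < s.
  rewrite lt_neqAle ler0n andbT; apply/eqP => s0; move: hA'; rewrite -s0 mulr0; lra.
have h1 : s * (q * w / 2) <= s * dd.
  have : 2%:R * K%:R * w <= q * s * w / 2 by nra.
  move: hc hcut; rewrite /=; nra.
rewrite ler_pM2l // in h1.
have h6 : 0 <= q * (w - (q * (n - 1) - 2%:R * K%:R)) by apply: mulr_ge0; [exact: ltW q0| lra].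
have h7 : 0 <= q * (q * n - 3 * q - 6 * K%:R) by apply: mulr_ge0; [exact: ltW q0| lra].
nra.
Qed.

End Real.


Fixpoint chain (T : finType) (e : rel T) (K : nat) (U P : {set T}) (i : nat) : {set T} :=
  match i with 0 => U | 1 => P | i'.+1 => NK e K (chain e K U P i') end.

Lemma chainS (T : finType) (e : rel T) K (U P : {set T}) i :
  chain e K U P i.+2 = NK e K (chain e K U P i.+1).
Proof. by []. Qed.

Lemma chain_mono (T : finType) (e : rel T) K (U P Q : {set T}) :
  P \subset NK e K Q -> Q \subset NK e K P ->
  forall i, chain e K U P i.+1 \subset chain e K U P i.+3.
Proof.
move=> PQ QP; elim=> [|i IH].
  rewrite /= ; apply: subset_trans PQ _; exact: NK_mono.
rewrite !chainS; exact: NK_mono.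
Qed.

Lemma chain_P (T : finType) (e : rel T) K (U P Q : {set T}) :
  P \subset NK e K Q -> Q \subset NK e K P ->
  forall m, P \subset chain e K U P (2 * m).+1.
Proof.
move=> PQ QP; elim=> [|m IH] //.
apply: subset_trans IH _; rewrite mulnS addSn add1n; exact: chain_mono PQ QP _.
Qed.

Unset Implicit Arguments.
Theorem lemma7p2 (R : realType) (D : nat) (q : R) :
  (1 <= D)%N -> 0 < q -> q <= 1 ->
  exists L0 : nat, forall L : nat, (L0 <= L)%N ->
  exists n0 : nat, forall n : nat, (n0 <= n)%N ->
  forall (T : finType) (e : rel T),
    symmetric e -> irreflexive e -> #|T| = n -> cut_dense e q ->
    forall (v : T) (U : {set T}), (L <= #|U|)%N ->
    exists h : nat, h%:R <= 19 / q ^+ 4 /\ contains_perfect_tree e D h v U.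
Proof.
move=> D1 q0 q1.
pose M := (Num.truncn (6 / q ^+ 2)).+1.
pose H := (2 * M).+2.
pose K := ((D.+1) ^ H).+1.
have K0 : (0 < K)%N by [].
have hKi : forall i, (i <= H)%N -> (D.+1 ^ i < K)%N.
  by move=> i hi; rewrite ltnS leq_pexp2l.
have hM1 : 6 / q ^+ 2 < M%:R by exact: truncnS_gt.
have hM2 : M%:R <= 6 / q ^+ 2 + 1.
  have h0 : 0 <= 6 / q ^+ 2 :> R by apply: divr_ge0 => //; apply: exprn_ge0; exact: ltW.
  by rewrite /M -natr1 lerD2r; case/andP: (trunc_itv h0).
have hH : H = (2 * M).+2 by [].
clearbody K H M.
have K0' : 0 < K%:R :> R by rewrite ltr0n.
exists (Num.truncn (4 * K%:R / q)).+1 => L hL.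
have hLq : 4 * K%:R <= q * L%:R.
  have := truncnS_gt (4 * K%:R / q); rewrite ltr_pdivrMr // => h.
  have : (Num.truncn (4 * K%:R / q)).+1%:R <= L%:R :> R by rewrite ler_nat.
  nra.
exists (Num.truncn (4 + 12 * K%:R / q ^+ 3)).+1 => n hn T e esym eirr hT hcd v U hU.
have q3 : 0 < q ^+ 3 by rewrite exprn_gt0.
have hn1 : 4 + 12 * K%:R / q ^+ 3 <= n%:R.
  have := truncnS_gt (4 + 12 * K%:R / q ^+ 3).
  have : (Num.truncn (4 + 12 * K%:R / q ^+ 3)).+1%:R <= n%:R :> R by rewrite ler_nat.
  lra.
have hn4 : 4 <= n%:R :> R.
  have : 0 <= 12 * K%:R / q ^+ 3 by apply: divr_ge0 => //; [lra | exact: ltW].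
  lra.
have hn2 : 12 * K%:R <= q ^+ 3 * (n%:R - 4).
  have h : 12 * K%:R / q ^+ 3 <= n%:R - 4 by lra.
  by move: h; rewrite ler_pdivrMr // [X in _ -> _ <= X]mulrC.
have q2 : q ^+ 2 <= 1 by rewrite exprn_ile1 // ltW.
have q3e : q ^+ 3 = q * q ^+ 2 by rewrite exprS.
have qq : q ^+ 3 <= q by rewrite q3e; nra.
have hq3n : 3 * q + 6 * K%:R <= q * n%:R.
  have : q ^+ 3 * (n%:R - 4) <= q * (n%:R - 4) by apply: ler_wpM2r => //; lra.
  nra.
rewrite -hT in hn4 hn2 hq3n.
pose W1 := NK e K U.
have hU' : 4 * K%:R <= q * #|U|%:R.
  have : L%:R <= #|U|%:R :> R by rewrite ler_nat.
  nra.
have hW1 := W1_lb esym eirr q0 hcd K0 hU' hn4.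
have [P [Q [PW PQ QP hE]]] := core esym K W1.
have hP : 4 * K%:R <= q * #|P|%:R.
  have hs := sumdeg_lb esym eirr hcd W1.
  have n0 : (0 < #|T|)%N by apply/card_gt0P; exists v.
  rewrite (natr_pred R n0) in hs.
  move: hE; rewrite -(ler_nat R) !natrD !natrM => hE.
  have hWn : #|W1|%:R <= #|T|%:R :> R by rewrite ler_nat max_card.
  set w := #|W1|%:R in hs hE hW1 hWn.
  set p := #|P|%:R in hE *.
  set nn := #|T|%:R in hs hE hW1 hWn hn4 hn2 hq3n *.
  have h1 : nn * (q ^+ 2 * (nn - 1) / 2) <= nn * (p + 2 * K%:R).
    have : q * nn / 2 * (q * (nn - 1)) <= w * (q * (nn - 1)).
      apply: ler_wpM2r => //; apply: mulr_ge0; [exact: ltW | lra].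
    rewrite /E in hs hE.
    have hK : K%:R * w <= K%:R * nn by apply: ler_wpM2l => //; exact: ler0n.
    have e1 : nn * (q ^+ 2 * (nn - 1) / 2) = q * nn / 2 * (q * (nn - 1)) by rewrite expr2; ring.
    have e2 : nn * (p + 2 * K%:R) = p * nn + K%:R * nn + K%:R * nn by ring.
    rewrite e1 e2; move: hE; rewrite mulrDr; lra.
  rewrite ler_pM2l in h1; last lra.
  have ha : q ^+ 3 * (nn - 1) / 2 <= q * p + 2 * (K%:R * q).
    have := ler_wpM2l (ltW q0) h1.
    by rewrite q3e; move=> h; apply: le_trans (_ : _ <= q * (p + 2 * K%:R)) _; [rewrite !mulrA in h *; lra | lra].
  have hb : q ^+ 3 * (nn - 4) <= q ^+ 3 * (nn - 1) by apply: ler_wpM2l; [exact: ltW | lra].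
  have : K%:R * q <= K%:R by rewrite ler_piMr //; exact: ltW.
  lra.
pose A := chain e K U P.
have hmono := chain_mono U PQ QP.
have hPm := chain_P U PQ QP.
have claim : forall m, (exists i, (0 < i <= (2 * m).+2)%N /\ v \in A i) \/
   m%:R * (q ^+ 2 * #|T|%:R / 3) <= (#|A (2 * m).+1| + #|A (2 * m).+2|)%:R.
  elim=> [|m IH].
    by right; rewrite mul0r ler0n.
  case: IH => [[i [hi vi]]|IH].
    left; exists i; split => //; clear -hi; lia.
  case: (boolP (v \in A (2 * m).+3)) => v3.
    by left; exists (2 * m).+3; split => //; clear; lia.
  case: (boolP (v \in A (2 * m).+4)) => v4.
    by left; exists (2 * m).+4; split => //; clear; lia.
  right.
  have hAm : 4 * K%:R <= q * #|A (2 * m).+1|%:R.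
    have : #|P|%:R <= #|A (2 * m).+1|%:R :> R by rewrite ler_nat subset_leq_card // hPm.
    move/(ler_wpM2l (ltW q0)); lra.
  have hg := grow_real esym eirr q0 hcd K0 (hmono (2 * m)) (hmono (2 * m).+1)
     (chainS _ _ _ _ _) (chainS _ _ _ _ _) v3 v4 hAm hq3n.
  have c1 : (#|A (2 * m).+1| <= #|A (2 * m).+3|)%N := subset_leq_card (hmono (2 * m)).
  have c2 : (#|A (2 * m).+2| <= #|A (2 * m).+4|)%N := subset_leq_card (hmono (2 * m).+1).
  have -> : (2 * m.+1).+1 = (2 * m).+3 by clear; lia.
  have -> : (#|A (2 * m).+3| + #|A (2 * m).+4| =
     (#|A (2 * m).+1| + #|A (2 * m).+2|) + ((#|A (2 * m).+3| - #|A (2 * m).+1|) + (#|A (2 * m).+4| - #|A (2 * m).+2|)))%N.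
    by clear -c1 c2; lia.
  rewrite natrD -natr1 mulrDl mul1r; lra.
have [[i [hi vi]]|hc] := claim M; last first.
  exfalso.
  have hs : (#|A (2 * M).+1| + #|A (2 * M).+2| <= 2 * #|T|)%N.
    by rewrite [(2 * #|T|)%N]mul2n -addnn leq_add // max_card.
  move: hs; rewrite -(ler_nat R) natrM => hs.
  have nn0 : 0 < #|T|%:R :> R by lra.
  have hq2 : 0 < q ^+ 2 by rewrite exprn_gt0.
  have hM : 6 < M%:R * q ^+ 2 by rewrite -ltr_pdivrMr.
  have : (M%:R * q ^+ 2 - 6) * #|T|%:R > 0 by apply: mulr_gt0 => //; lra.
  have e1 : M%:R * (q ^+ 2 * #|T|%:R / 3) = (M%:R * q ^+ 2) * #|T|%:R / 3 by ring.
  rewrite e1 in hc; lra.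
have hY0 : A 0 \subset U by [].
have hY : forall j x, x \in A j.+1 -> (K <= nb e x (A j))%N.
  case=> [|j] x /=.
    by move=> /(subsetP PW); rewrite inE.
  by rewrite inE.
have vF : v \notin (set0 : {set T}) by rewrite inE.
have hb : (#|(set0 : {set T})| + D.+1 ^ i < K)%N.
  rewrite cards0 add0n; apply: hKi; rewrite hH; by case/andP: hi.
have [S [p [d [Tr _ _]]]] := build esym hY0 hY vi vF (leqnn D) hb.
- exists i; split; last by exists S, p, d.
  case/andP: hi => _ hi.
  have : i%:R <= (2 * M).+2%:R :> R by rewrite ler_nat.
  rewrite -natr1 -natr1 natrM => hi'.
  set t := (q ^+ 2)^-1.
  have hq2 : 0 < q ^+ 2 by rewrite exprn_gt0.
  have ht : t * q ^+ 2 = 1 by rewrite mulVf // gt_eqF.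
  have t1 : 1 <= t.
    have : 0 < t by rewrite invr_gt0.
    nra.
  have e6 : 6 / q ^+ 2 = 6 * t by [].
  have e19 : 19 / q ^+ 4 = 19 * (t * t).
    by rewrite /t -invfM -expr2 -exprM.
  rewrite e6 in hM2; rewrite e19.
  nra.
Qed.
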